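(* Let $f:[0,\infty)\to\mathbb{R}$ be differentiable, let $0<a<b<\infty$, and suppose $f'$ is Lebesgue integrable on $[a,b]$. Let $(\alpha,m)\in(0,1]^2$ and $q>1$, and suppose $|f'|^q$ is $(\alpha,m)$-GA-convex on $[0,\max\{a^{1/m},b\}]$. Then \[ \biggl|\frac{b^2f(b)-a^2f(a)}{2}-\int_a^b xf(x)\,dx\biggr|\le\frac{\ln b-\ln a}{2}\Bigl(\frac{1}{\alpha+1}\Bigr)^{1/q}\bigl[L\bigl(a^{3q/(q-1)},b^{3q/(q-1)}\bigr)\bigr]^{1-1/q}\Bigl[|f'(b)|^q+\alpha m\bigl|f'(a^{1/m})\bigr|^q\Bigr]^{1/q}. \]
   Context: For $c>0$, $h:[0,c]\to\mathbb{R}$ and $(\alpha,m)\in(0,1]^2$, $h$ is called $(\alpha,m)$-GA-convex on $[0,c]$ if $h\bigl(x^\lambda y^{m(1-\lambda)}\bigr)\le\lambda^\alpha h(x)+m(1-\lambda^\alpha)h(y)$ for all $x,y\in[0,c]$ and all $\lambda\in[0,1]$ (with the convention $0^0=1$). For $x,y>0$, $x\neq y$, the logarithmic mean is $L(x,y)=\frac{y-x}{\ln y-\ln x}$. *)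

(* Defs.v *)
From Stdlib Require Import Reals.
Open Scope R_scope.

(* Real power for nonnegative bases, with the convention 0^0 = 1 and
   0^y = 0 for y <> 0 (only used with y >= 0). *)
Definition rpow (x y : R) : R :=
  if Rlt_dec 0 x then Rpower x y
  else if Req_EM_T y 0 then 1 else 0.

Definition GA_convex (alpha m c : R) (h : R -> R) : Prop :=
  forall x y lam, 0 <= x <= c -> 0 <= y <= c -> 0 <= lam <= 1 ->
    h (rpow x lam * rpow y (m * (1 - lam)))
      <= rpow lam alpha * h x + m * (1 - rpow lam alpha) * h y.

Definition logmean (x y : R) : R := (y - x) / (ln y - ln x).

Definition right_deriv (f : R -> R) (x l : R) : Prop :=
  forall eps, 0 < eps -> exists delta, 0 < delta /\
    forall h, 0 < h < delta -> Rabs ((f (x + h) - f x) / h - l) < eps.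

(* f : [0,oo) -> R is differentiable with derivative f':
   two-sided derivative at interior points, right derivative at 0. *)
Definition diff_on_nonneg (f f' : R -> R) : Prop :=
  (forall x, 0 < x -> derivable_pt_lim f x (f' x)) /\ right_deriv f 0 (f' 0).

(* Main.v *)
Require Import Defs.
From Stdlib Require Import Reals Lra.
From Coquelicot Require Import Coquelicot.
Open Scope R_scope.

Lemma rpow_pos x y : 0 < x -> rpow x y = Rpower x y.
Proof. intro H; unfold rpow; destruct (Rlt_dec 0 x); [reflexivity|lra]. Qed.

Lemma rpow_ge0 x y : 0 <= rpow x y.
Proof.
  unfold rpow; destruct (Rlt_dec 0 x).
  - unfold Rpower; left; apply exp_pos.
  - destruct (Req_EM_T y 0); lra.
Qed.

Lemma rpow_nonpos x y : x <= 0 -> y <> 0 -> rpow x y = 0.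
Proof.
  intros H1 H2; unfold rpow; destruct (Rlt_dec 0 x); [lra|].
  destruct (Req_EM_T y 0); [contradiction|reflexivity].
Qed.

Lemma exp_convex l x y : 0 <= l <= 1 ->
  exp (l * x + (1 - l) * y) <= l * exp x + (1 - l) * exp y.
Proof.
  intros Hl. set (z := l * x + (1 - l) * y).
  assert (H1 : exp z * (1 + (x - z)) <= exp x).
  { replace x with (z + (x - z)) at 2 by ring. rewrite exp_plus.
    apply Rmult_le_compat_l; [left; apply exp_pos| apply exp_ineq1_le]. }
  assert (H2 : exp z * (1 + (y - z)) <= exp y).
  { replace y with (z + (y - z)) at 2 by ring. rewrite exp_plus.
    apply Rmult_le_compat_l; [left; apply exp_pos| apply exp_ineq1_le]. }
  assert (E : l * (exp z * (1 + (x - z))) + (1 - l) * (exp z * (1 + (y - z))) = exp z)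
    by (unfold z; ring).
  rewrite <- E.
  apply Rplus_le_compat; apply Rmult_le_compat_l; lra.
Qed.

Lemma young q U W : 1 < q ->
  exp (U + W) <= exp ((q / (q - 1)) * U) / (q / (q - 1)) + exp (q * W) / q.
Proof.
  intros Hq.
  pose proof (exp_convex ((q-1)/q) ((q / (q - 1)) * U) (q * W)) as H.
  assert (E1 : (q - 1) / q * (q / (q - 1) * U) + (1 - (q - 1) / q) * (q * W) = U + W)
    by (field; lra).
  rewrite E1 in H.
  assert (E2 : exp (q / (q - 1) * U) / (q / (q - 1)) = (q - 1) / q * exp (q / (q - 1) * U))
    by (field; lra).
  assert (E3 : exp (q * W) / q = (1 - (q - 1) / q) * exp (q * W)) by (field; lra).
  rewrite E2, E3. apply H.
  split. apply Rmult_le_pos; [lra| left; apply Rinv_0_lt_compat; lra].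
  apply (Rmult_le_reg_r q); [lra|]. unfold Rdiv. rewrite Rmult_assoc, Rinv_l; lra.
Qed.

Lemma pt_bound q Lm V y psi s : 1 < q -> 0 < Lm -> 0 <= V -> 0 <= y ->
  rpow y q <= psi -> (V = 0 -> psi = 0) ->
  exp (3 * s) * y <= (Rpower Lm (1 - 1/q) * rpow V (1/q)) *
     (exp ((3 * (q / (q - 1))) * s) / ((q / (q-1)) * Lm) + psi / (q * V)).
Proof.
  intros Hq HL HV Hy Hpsi HV0.
  assert (Hq0 : 1 / q <> 0) by (unfold Rdiv; rewrite Rmult_1_l; apply Rinv_neq_0_compat; lra).
  destruct HV as [HV|HV].
  2:{ subst V. rewrite (rpow_nonpos 0 (1/q)) by lra.
      specialize (HV0 eq_refl). subst psi.
      destruct Hy as [Hy|Hy].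
      - rewrite rpow_pos in Hpsi by lra. unfold Rpower in Hpsi.
        pose proof (exp_pos (q * ln y)); lra.
      - subst y. rewrite !Rmult_0_r, !Rmult_0_l. lra. }
  assert (HK : 0 < Rpower Lm (1 - 1/q) * rpow V (1/q)).
  { rewrite rpow_pos by lra. unfold Rpower. apply Rmult_lt_0_compat; apply exp_pos. }
  assert (Hpsi0 : 0 <= psi) by (pose proof (rpow_ge0 y q); lra).
  assert (Hpq : 0 < q / (q - 1)) by (apply Rdiv_lt_0_compat; lra).
  destruct Hy as [Hy|Hy].
  2:{ subst y. rewrite Rmult_0_r. apply Rmult_le_pos; [lra|].
      apply Rplus_le_le_0_compat.
      - apply Rmult_le_pos; [left; apply exp_pos|].
        left; apply Rinv_0_lt_compat; apply Rmult_lt_0_compat; lra.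
      - apply Rmult_le_pos; [lra|].
        left; apply Rinv_0_lt_compat; apply Rmult_lt_0_compat; lra. }
  rewrite rpow_pos in Hpsi, HK by lra. rewrite rpow_pos by lra.
  pose proof (young q (3 * s - (1 - 1/q) * ln Lm) (ln y - (1/q) * ln V) Hq) as Y.
  assert (E1 : exp (q / (q - 1) * (3 * s - (1 - 1 / q) * ln Lm)) =
               exp (3 * (q / (q - 1)) * s) / Lm).
  { replace (q / (q - 1) * (3 * s - (1 - 1 / q) * ln Lm)) with
      (3 * (q / (q - 1)) * s + - ln Lm) by (field; lra).
    rewrite exp_plus, exp_Ropp, exp_ln by lra. reflexivity. }
  assert (E2 : exp (q * (ln y - 1 / q * ln V)) = Rpower y q / V).
  { replace (q * (ln y - 1 / q * ln V)) with (q * ln y + - ln V) by (field; lra).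
    rewrite exp_plus, exp_Ropp, exp_ln by lra. reflexivity. }
  assert (E3 : exp (3 * s - (1 - 1 / q) * ln Lm + (ln y - 1 / q * ln V)) *
      (Rpower Lm (1 - 1 / q) * Rpower V (1 / q)) = exp (3 * s) * y).
  { unfold Rpower.
    replace (3 * s - (1 - 1 / q) * ln Lm + (ln y - 1 / q * ln V)) with
      (3 * s + ln y + - ((1 - 1/q) * ln Lm) + - (1/q * ln V)) by ring.
    rewrite !exp_plus, !exp_Ropp, exp_ln by lra.
    field. split; apply Rgt_not_eq, exp_pos. }
  rewrite E1, E2 in Y. rewrite <- E3.
  rewrite Rmult_comm. apply Rmult_le_compat_l; [lra|].
  eapply Rle_trans; [apply Y|].
  apply Rplus_le_compat.
  - right. field. lra.
  - unfold Rdiv. rewrite Rinv_mult. rewrite !Rmult_assoc, (Rmult_comm (/ q)).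
    rewrite <- !Rmult_assoc. apply Rmult_le_compat_r; [left; apply Rinv_0_lt_compat; lra|].
    apply Rmult_le_compat_r; [left; apply Rinv_0_lt_compat; lra|]. exact Hpsi.
Qed.

Lemma R1_derive al t : 0 < al -> t < 1 ->
  is_derive (fun t => rpow (1 - t) (al + 1)) t (-(al + 1) * rpow (1 - t) al).
Proof.
  intros Ha Ht.
  apply is_derive_ext_loc with (f := fun t => exp ((al + 1) * ln (1 - t))).
  { assert (Hp : 0 < 1 - t) by lra.
    exists (mkposreal _ Hp). intros y Hy. simpl.
    unfold ball in Hy; simpl in Hy; unfold AbsRing_ball, abs, minus, plus, opp in Hy; simpl in Hy.
    rewrite rpow_pos. reflexivity.
    apply Rabs_lt_between in Hy. lra. }
  rewrite rpow_pos by lra.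
  assert (E : (al + 1) * (- (1) * / (1 + - t)) * exp ((al + 1) * ln (1 + - t)) =
     -(al + 1) * Rpower (1 - t) al).
  { unfold Rpower. replace (1 + - t) with (1 - t) by ring.
    replace ((al + 1) * ln (1 - t)) with (al * ln (1 - t) + ln (1 - t)) by ring.
    rewrite exp_plus, exp_ln by lra. field. lra. }
  rewrite <- E. auto_derive. lra. reflexivity.
Qed.

Lemma R1_cont1 al : 0 < al -> continuous (fun t => rpow (1 - t) (al + 1)) 1.
Proof.
  intros Ha. apply continuity_pt_filterlim.
  unfold continuity_pt, continue_in, limit1_in, limit_in; simpl; unfold R_dist.
  intros eps He. exists (Rmin eps 1). split. apply Rmin_pos; lra.
  intros x [_ Hx].
  rewrite Rminus_diag, (rpow_nonpos 0) by lra.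
  pose proof (Rmin_l eps 1). pose proof (Rmin_r eps 1).
  apply Rabs_lt_between in Hx.
  destruct (Rle_lt_dec (1 - x) 0) as [Hc|Hc].
  - rewrite rpow_nonpos by lra. rewrite Rminus_diag, Rabs_R0; lra.
  - rewrite rpow_pos by lra.
    unfold Rpower. rewrite Rminus_0_r, Rabs_pos_eq by (left; apply exp_pos).
    replace ((al + 1) * ln (1 - x)) with (al * ln (1 - x) + ln (1 - x)) by ring.
    rewrite exp_plus, exp_ln by lra.
    assert (exp (al * ln (1 - x)) < 1).
    { assert (ln (1 - x) < 0). { rewrite <- ln_1. apply ln_increasing; lra. }
      assert (al * ln (1 - x) < 0) by nra.
      rewrite <- exp_0 at 2. apply exp_increasing. lra. }
    nra.
Qed.

Definition Fp (f : R -> R) (a y : R) := y ^ 2 * f y - 2 * RInt (fun s => s * f s) a y.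

Lemma g_cont (f f' : R -> R) z :
  (forall x, 0 < x -> derivable_pt_lim f x (f' x)) -> 0 < z ->
  continuous (fun s => s * f s) z.
Proof.
  intros Hf Hz.
  apply (@continuous_mult R_UniformSpace R_AbsRing (fun s => s) f). apply continuous_id.
  apply (@ex_derive_continuous R_AbsRing R_NormedModule). exists (f' z). apply is_derive_Reals. auto.
Qed.

Lemma F_derive (f f' : R -> R) a y :
  (forall x, 0 < x -> derivable_pt_lim f x (f' x)) -> 0 < a -> 0 < y ->
  is_derive (Fp f a) y (y ^ 2 * f' y).
Proof.
  intros Hf Ha Hy.
  assert (D1 : is_derive (fun y => y ^ 2) y (2 * y)) by (auto_derive; [auto|ring]).
  assert (D2 : is_derive f y (f' y)) by (apply is_derive_Reals; auto).
  assert (D3 : is_derive (RInt (fun s => s * f s) a) y (y * f y)).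
  { apply (is_derive_RInt (fun s => s * f s) _ a).
    - assert (Hp : 0 < y / 2) by lra.
      exists (mkposreal _ Hp). intros b0 Hb. simpl in Hb.
      unfold ball in Hb; simpl in Hb; unfold AbsRing_ball, abs, minus, plus, opp in Hb; simpl in Hb.
      apply Rabs_lt_between in Hb.
      apply (@RInt_correct R_CompleteNormedModule), (@ex_RInt_continuous R_CompleteNormedModule). intros z Hz.
      apply (g_cont f f'); auto.
      assert (0 < Rmin a b0) by (apply Rmin_pos; lra). lra.
    - apply (g_cont f f'); auto. }
  pose proof (is_derive_mult _ _ _ _ _ D1 D2 ltac:(intros; apply Rmult_comm)) as D4.
  pose proof (is_derive_scal _ _ 2 _ D3) as D5.
  pose proof (is_derive_minus _ _ _ _ _ D4 D5) as D6.
  unfold Fp. simpl in D6. unfold mult, plus, minus, opp in D6; simpl in D6.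
  replace (y ^ 2 * f' y) with (2 * y * f y + y ^ 2 * f' y + - (2 * (y * f y))) by ring.
  exact D6.
Qed.

Theorem theorem3p2 (f f' : R -> R) (a b alpha m q : R)
  (Hf : diff_on_nonneg f f')
  (Ha : 0 < a) (Hab : a < b)
  (Halpha : 0 < alpha <= 1) (Hm : 0 < m <= 1) (Hq : 1 < q)
  (Hconv : GA_convex alpha m (Rmax (rpow a (1 / m)) b)
             (fun x => rpow (Rabs (f' x)) q))
  (pr : Riemann_integrable (fun x => x * f x) a b) :
  Rabs ((b ^ 2 * f b - a ^ 2 * f a) / 2 - RiemannInt pr)
  <= (ln b - ln a) / 2
     * rpow (1 / (alpha + 1)) (1 / q)
     * rpow (logmean (rpow a (3 * q / (q - 1))) (rpow b (3 * q / (q - 1))))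
            (1 - 1 / q)
     * rpow (rpow (Rabs (f' b)) q
             + alpha * m * rpow (Rabs (f' (rpow a (1 / m)))) q) (1 / q).
Proof.
  destruct Hf as [Hf _].
  assert (Hb : 0 < b) by lra.
  set (la := ln a). set (lb := ln b).
  assert (Hlab : la < lb) by (apply ln_increasing; lra).
  set (d := lb - la).
  set (pq := q / (q - 1)). set (P := 3 * pq).
  assert (Hpq : 0 < pq) by (apply Rdiv_lt_0_compat; lra).
  assert (HP : 0 < P) by (unfold P; lra).
  set (Lm := (exp (P * lb) - exp (P * la)) / (P * lb - P * la)).
  assert (HLm : 0 < Lm).
  { apply Rdiv_lt_0_compat.
    - assert (exp (P * la) < exp (P * lb)) by (apply exp_increasing; nra). lra.
    - nra. }
  set (A := rpow (Rabs (f' b)) q).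
  set (B := rpow (Rabs (f' (rpow a (1 / m)))) q).
  assert (HA : 0 <= A) by apply rpow_ge0.
  assert (HB : 0 <= B) by apply rpow_ge0.
  set (V := (A + alpha * m * B) / (alpha + 1)).
  assert (HV : 0 <= V).
  { apply Rmult_le_pos; [|left; apply Rinv_0_lt_compat; lra].
    assert (0 <= alpha * m * B) by (apply Rmult_le_pos; [nra|lra]). lra. }
  set (K := Rpower Lm (1 - 1/q) * rpow V (1/q)).
  set (c1 := / (pq * Lm)). set (c2 := / (q * V)).
  set (st := fun t => t * la + (1 - t) * lb).
  set (R1 := fun t => rpow (1 - t) (alpha + 1)).
  set (psi := fun t => rpow (1 - t) alpha * A + m * (1 - rpow (1 - t) alpha) * B).
  set (W1 := fun t => (exp (P * st t) - exp (P * lb)) / (P * (la - lb))).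
  set (W2 := fun t => A * (1 - R1 t) / (alpha + 1) + m * B * (t - (1 - R1 t) / (alpha + 1))).
  set (H := fun t => K * (W1 t * c1 + W2 t * c2)).
  set (G := fun t => Fp f a (exp (st t))).
  set (G' := fun t => exp (st t) ^ 2 * f' (exp (st t)) * (exp (st t) * (la - lb))).
  assert (key : forall s, s = 1 \/ s = -1 -> s * (Fp f a b - Fp f a a) <= d * K).
  { intros s Hs.
    assert (Hal1 : alpha + 1 <> 0) by lra.
    set (kap := d * K * c2 * ((m * B - A) / (alpha + 1))).
    set (E := fun t => d * K * (W1 t * c1 + (A / (alpha + 1) + m * B * (t - 1 / (alpha + 1))) * c2) + s * G t).
    set (Dfun := fun t => d * H t + s * G t).
    set (df := fun t => d * K * (exp (P * st t) * c1 + psi t * c2) + s * G' t).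
    assert (ED : forall t, Dfun t = E t + kap * R1 t).
    { intros t; unfold Dfun, E, H, W2, kap. field. lra. }
    assert (DG : forall t, is_derive G t (G' t)).
    { intros t.
      assert (D1 : is_derive (fun t => exp (st t)) t (exp (st t) * (la - lb))).
      { unfold st. auto_derive; [auto|]. replace (1 + - t) with (1 - t) by ring; ring. }
      pose proof (F_derive f f' a (exp (st t)) Hf Ha (exp_pos _)) as D2.
      pose proof (is_derive_comp (Fp f a) (fun t => exp (st t)) t _ _ D2 D1) as D3.
      unfold G, G'. simpl in D3. unfold scal in D3; simpl in D3; unfold mult in D3; simpl in D3.
      replace (exp (st t) ^ 2 * f' (exp (st t)) * (exp (st t) * (la - lb)))
        with (exp (st t) * (la - lb) * (exp (st t) ^ 2 * f' (exp (st t)))) by ring.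
      exact D3. }
    assert (DW1 : forall t, is_derive W1 t (exp (P * st t))).
    { intros t. unfold W1, st. auto_derive.
      - auto.
      - replace (1 + - t) with (1 - t) by ring. field. split; lra. }
    assert (DE : forall t, is_derive E t (d * K * (exp (P * st t) * c1 + m * B * c2) + s * G' t)).
    { intros t. unfold E. auto_derive.
      - split; [exists (exp (P * st t)); apply DW1|split; [exists (G' t); apply DG|trivial]].
      - replace (Derive (fun x : R => W1 x) t) with (exp (P * st t)) by (symmetry; apply is_derive_unique; apply DW1).
        replace (Derive (fun x : R => G x) t) with (G' t) by (symmetry; apply is_derive_unique; apply DG). ring. }
    assert (DD : forall t, t < 1 -> is_derive Dfun t (df t)).
    { intros t Ht.
      apply is_derive_ext with (f := fun t => E t + kap * R1 t).
      { intros; symmetry; apply ED. }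
      pose proof (R1_derive alpha t (proj1 Halpha) Ht) as DR.
      pose proof (is_derive_scal _ _ kap _ DR) as DR2.
      pose proof (is_derive_plus _ _ _ _ _ (DE t) DR2) as D3.
      simpl in D3. unfold plus in D3; simpl in D3.
      replace (df t) with (d * K * (exp (P * st t) * c1 + m * B * c2) + s * G' t +
         kap * (- (alpha + 1) * rpow (1 - t) alpha)).
      exact D3.
      unfold df, kap, psi. field. lra. }
    assert (CD : forall t, 0 <= t <= 1 -> continuity_pt Dfun t).
    { intros t Ht. destruct (Rlt_le_dec t 1) as [Ht1|Ht1].
      - apply continuity_pt_filterlim.
        apply (@ex_derive_continuous R_AbsRing R_NormedModule).
        exists (df t). apply DD; exact Ht1.
      - assert (t = 1) by lra. subst t.
        apply continuity_pt_ext with (f := (E + (fct_cte kap * R1))%F).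
        { intros x. unfold plus_fct, mult_fct, fct_cte. symmetry. apply ED. }
        apply continuity_pt_plus.
        + apply continuity_pt_filterlim.
          apply (@ex_derive_continuous R_AbsRing R_NormedModule).
          eexists. apply DE.
        + apply continuity_pt_mult.
          * apply continuity_pt_const. intros x y. reflexivity.
          * apply continuity_pt_filterlim. apply (R1_cont1 alpha (proj1 Halpha)). }
    assert (SG : forall t, 0 <= t <= 1 -> 0 <= df t).
    { intros t Ht. unfold df.
      pose proof (Hconv b (rpow a (1/m)) (1 - t)) as Hc.
      assert (EX : rpow b (1 - t) * rpow (rpow a (1 / m)) (m * (1 - (1 - t))) = exp (st t)).
      { rewrite (rpow_pos a) by lra.
        rewrite (rpow_pos b) by lra.
        rewrite (rpow_pos (Rpower a (1 / m))) by (unfold Rpower; apply exp_pos).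
        unfold Rpower, st. rewrite ln_exp. rewrite <- exp_plus. f_equal.
        unfold lb, la. field. lra. }
      rewrite EX in Hc.
      assert (Hc' : rpow (Rabs (f' (exp (st t)))) q <= psi t).
      { apply Hc.
        - split; [lra|apply Rmax_r].
        - split; [apply rpow_ge0|apply Rmax_l].
        - lra. }
      clear Hc.
      assert (HV0 : V = 0 -> psi t = 0).
      { intros HV0.
        assert (ES : A + alpha * m * B = V * (alpha + 1)) by (unfold V; field; lra).
        rewrite HV0, Rmult_0_l in ES.
        assert (0 <= alpha * m * B) by (apply Rmult_le_pos; [nra|lra]).
        assert (HA0 : A = 0) by lra.
        assert (HB0 : B = 0).
        { assert (alpha * m * B = 0) by lra.
          assert (0 < alpha * m) by nra.
          apply (Rmult_eq_reg_l (alpha * m)); lra. }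
        unfold psi. rewrite HA0, HB0. ring. }
      pose proof (pt_bound q Lm V (Rabs (f' (exp (st t)))) (psi t) (st t) Hq HLm HV
                   (Rabs_pos _) Hc' HV0) as Hpt.
      assert (Hb2 : exp (3 * st t) * Rabs (f' (exp (st t))) <=
                    K * (exp (P * st t) * c1 + psi t * c2)) by exact Hpt.
      clear Hpt.
      set (x := exp (st t)) in *.
      assert (Hx : 0 < x) by apply exp_pos.
      assert (E3 : exp (3 * st t) = x ^ 3).
      { unfold x. replace (3 * st t) with (st t + st t + st t) by ring.
        rewrite !exp_plus. ring. }
      rewrite E3 in Hb2.
      assert (EG : Rabs (s * G' t) = d * (x ^ 3 * Rabs (f' x))).
      { replace (G' t) with (-(x ^ 3 * (lb - la)) * f' x) by (unfold G'; fold x; ring).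
        rewrite !Rabs_mult, Rabs_Ropp, (Rabs_pos_eq (x ^ 3 * (lb - la))).
        - destruct Hs as [Hs|Hs]; rewrite Hs; [rewrite Rabs_R1|rewrite (Rabs_left (-1)) by lra];
          unfold d; ring.
        - apply Rmult_le_pos; [apply pow_le; lra|lra]. }
      pose proof (Rabs_maj2 (s * G' t)) as Hm2. rewrite EG in Hm2.
      assert (Hd : 0 < d) by (unfold d; lra).
      assert (d * (x ^ 3 * Rabs (f' x)) <= d * (K * (exp (P * st t) * c1 + psi t * c2)))
        by (apply Rmult_le_compat_l; lra).
      lra. }
    assert (H0 : H 0 = 0).
    { unfold H, W1, W2, R1, st. replace (0 * la + (1 - 0) * lb) with lb by ring.
      replace (1 - 0) with 1 by ring. rewrite (rpow_pos 1) by lra.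
      unfold Rpower. rewrite ln_1, Rmult_0_r, exp_0. unfold Rdiv. ring. }
    assert (H1 : H 1 = K).
    { unfold H, W1, W2, R1, st. replace (1 * la + (1 - 1) * lb) with la by ring.
      replace (1 - 1) with 0 by ring. rewrite (rpow_nonpos 0) by lra.
      assert (EW1 : (exp (P * la) - exp (P * lb)) / (P * (la - lb)) = Lm)
        by (unfold Lm; field; split; nra).
      rewrite EW1.
      assert (EW2 : A * (1 - 0) / (alpha + 1) + m * B * (1 - (1 - 0) / (alpha + 1)) = V)
        by (unfold V; field; lra).
      rewrite EW2. destruct HV as [HV|HV].
      - unfold c1, c2, pq. field. repeat split; lra.
      - unfold K. rewrite <- HV, (rpow_nonpos 0) by (try lra; unfold Rdiv; rewrite Rmult_1_l; apply Rinv_neq_0_compat; lra). ring. }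
    assert (G0 : G 0 = Fp f a b).
    { unfold G, st. replace (0 * la + (1 - 0) * lb) with lb by ring.
      unfold lb. rewrite exp_ln by lra. reflexivity. }
    assert (G1 : G 1 = Fp f a a).
    { unfold G, st. replace (1 * la + (1 - 1) * lb) with la by ring.
      unfold la. rewrite exp_ln by lra. reflexivity. }
    destruct (MVT_gen Dfun 0 1 df) as [c [Hc Ec]].
    - rewrite Rmin_left, Rmax_right by lra. intros x Hx. apply DD. lra.
    - rewrite Rmin_left, Rmax_right by lra. intros x Hx. apply CD. lra.
    - rewrite Rmin_left, Rmax_right in Hc by lra.
      pose proof (SG c Hc). unfold Dfun in Ec. rewrite H0, H1, G0, G1 in Ec. nra. }
  assert (EL : (b ^ 2 * f b - a ^ 2 * f a) / 2 - RiemannInt pr = (Fp f a b - Fp f a a) / 2).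
  { unfold Fp. rewrite <- (RInt_Reals _ _ _ pr).
    rewrite (RInt_point a (fun s => s * f s)). unfold zero; simpl. field. }
  assert (ER : (ln b - ln a) / 2
     * rpow (1 / (alpha + 1)) (1 / q)
     * rpow (logmean (rpow a (3 * q / (q - 1))) (rpow b (3 * q / (q - 1))))
            (1 - 1 / q)
     * rpow (rpow (Rabs (f' b)) q
             + alpha * m * rpow (Rabs (f' (rpow a (1 / m)))) q) (1 / q) = d * K / 2).
  { fold A B. fold la lb.
    assert (E1 : logmean (rpow a (3 * q / (q - 1))) (rpow b (3 * q / (q - 1))) = Lm).
    { unfold logmean. rewrite !rpow_pos by lra. unfold Rpower. rewrite !ln_exp.
      fold la lb. replace (3 * q / (q - 1)) with P by (unfold P, pq; field; lra).
      unfold Lm. f_equal; ring. }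
    rewrite E1, (rpow_pos Lm) by lra.
    assert (Hq0 : 1 / q <> 0) by (unfold Rdiv; rewrite Rmult_1_l; apply Rinv_neq_0_compat; lra).
    assert (HS : 0 <= A + alpha * m * B).
    { assert (0 <= alpha * m * B) by (apply Rmult_le_pos; [nra|lra]). lra. }
    unfold K, d. destruct HS as [HS|HS].
    - rewrite (rpow_pos V) by (unfold V; apply Rdiv_lt_0_compat; lra).
      rewrite !rpow_pos by (try apply Rdiv_lt_0_compat; lra).
      assert (EV : Rpower V (1 / q) = Rpower (1 / (alpha + 1)) (1 / q) * Rpower (A + alpha * m * B) (1 / q)).
      { rewrite Rpower_mult_distr by (try apply Rdiv_lt_0_compat; lra).
        unfold V. f_equal. field. lra. }
      rewrite EV. field.
    - rewrite <- HS. assert (V = 0) by (unfold V; rewrite <- HS; field; lra).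
      rewrite H0, !(rpow_nonpos 0) by lra. rewrite !Rmult_0_r; unfold Rdiv; ring. }
  fold la lb A B in ER. fold d in ER. rewrite EL, ER.
  unfold Rdiv. rewrite Rabs_mult, (Rabs_pos_eq (/ 2)) by lra.
  apply Rmult_le_compat_r; [lra|].
  apply Rabs_le. split.
  - pose proof (key (-1) (or_intror eq_refl)). lra.
  - pose proof (key 1 (or_introl eq_refl)). lra.
Qed.
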